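(* Let $(B,k)$ be an instance of the orthogonal buttons and scissors problem. If $B$ contains more than $k^2$ light buttons, then $(B,k)$ is a no-instance.
   Context: An instance of the orthogonal buttons and scissors problem is a pair $(B,k)$ where $B$ is an $n\times m$ matrix with nonnegative integer entries and $k$ is a nonnegative integer. Cell $(i,j)$ contains a button of color $c$ if $B[i,j]=c>0$, and no button if $B[i,j]=0$. A cut is either a horizontal cut (a sequence of consecutive cells in one row) or a vertical cut (a sequence of consecutive cells in one column). Cuts are applied one after another; a cut is valid at the moment it is applied if, among the buttons still present, its first and last cells contain buttons and all buttons in its cells have the same color. Applying a cut deletes all buttons in its cells. $(B,k)$ is a yes-instance if some sequence of at most $k$ cuts, each valid when applied, removes all buttons of $B$, and a no-instance otherwise. A row or column of $B$ is heavy if it contains at least $k+1$ buttons and light otherwise. A button is heavy if it lies in some heavy row or heavy column, and light otherwise. *)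

(* Defs.v *)
From mathcomp Require Import all_boot all_algebra.
Set Implicit Arguments. Unset Strict Implicit. Unset Printing Implicit Defensive.

Definition cell (n m : nat) := ('I_n * 'I_m)%type.

(* A cut: horizontal in row i from column a to column b,
   or vertical in column j from row a to row b.  The cells of the cut
   are the consecutive cells between its first cell and its last cell. *)
Inductive cut (n m : nat) :=
| HCut of 'I_n & 'I_m & 'I_m
| VCut of 'I_m & 'I_n & 'I_n.

Section BS.
Variables (n m : nat).

Definition cut_cells (c : cut n m) : {set cell n m} :=
  match c with
  | HCut i a b => [set x : cell n m | (x.1 == i) && (a <= x.2 <= b)]
  | VCut j a b => [set x : cell n m | (x.2 == j) && (a <= x.1 <= b)]
  end.

Definition cut_first (c : cut n m) : cell n m :=
  match c with HCut i a _ => (i, a) | VCut j a _ => (a, j) end.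
Definition cut_last (c : cut n m) : cell n m :=
  match c with HCut i _ b => (i, b) | VCut j _ b => (b, j) end.
Definition cut_wf (c : cut n m) : bool :=
  match c with HCut _ a b => a <= b | VCut _ a b => a <= b end.

Variable B : 'M[nat]_(n, m).

Definition color (x : cell n m) : nat := B x.1 x.2.

Definition buttons : {set cell n m} := [set x | 0 < color x].

Definition valid_cut (S : {set cell n m}) (c : cut n m) : bool :=
  [&& cut_wf c, cut_first c \in S, cut_last c \in S &
      [forall x in cut_cells c :&: S, forall y in cut_cells c :&: S,
         color x == color y]].

Definition apply_cut (S : {set cell n m}) (c : cut n m) : {set cell n m} :=
  S :\: cut_cells c.

Fixpoint run (S : {set cell n m}) (s : seq (cut n m)) : option {set cell n m} :=
  match s with
  | [::] => Some S
  | c :: s' => if valid_cut S c then run (apply_cut S c) s' else None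
  end.

Definition yes_instance (k : nat) : Prop :=
  exists s : seq (cut n m), size s <= k /\ run buttons s = Some set0.

Definition row_count (i : 'I_n) : nat := #|[set j : 'I_m | 0 < B i j]|.
Definition col_count (j : 'I_m) : nat := #|[set i : 'I_n | 0 < B i j]|.

Definition heavy_row (k : nat) (i : 'I_n) : bool := k.+1 <= row_count i.
Definition heavy_col (k : nat) (j : 'I_m) : bool := k.+1 <= col_count j.

Definition light_buttons (k : nat) : {set cell n m} :=
  [set x in buttons | ~~ heavy_row k x.1 && ~~ heavy_col k x.2].

End BS.

(* Main.v *)
Require Import Defs.
From mathcomp Require Import all_boot all_algebra.
Set Implicit Arguments. Unset Strict Implicit. Unset Printing Implicit Defensive.

Section Aux.
Variables (n m : nat) (B : 'M[nat]_(n, m)) (k : nat).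
Let L := light_buttons B k.

Lemma row_light (i : 'I_n) : #|[set x in L | x.1 == i]| <= k.
Proof.
case: (set_0Vmem [set x in L | x.1 == i]) => [->|[x0]]; first by rewrite cards0.
rewrite !inE => /andP[/andP[_ /andP[hr _]] /eqP e].
have hr' : row_count B i <= k by rewrite leqNgt -e.
apply: leq_trans hr'.
rewrite -(@card_in_imset _ _ (fun x : cell n m => x.2)); last first.
  move=> [a b] [c d]; rewrite !inE /= => /andP[_ /eqP ->] /andP[_ /eqP ->] -> //.
apply: subset_leq_card; apply/subsetP => y /imsetP[[a b]].
rewrite !inE /= => /andP[/andP[hb _] /eqP ea] ->; move: hb.
by rewrite /color /= ea.
Qed.

Lemma col_light (j : 'I_m) : #|[set x in L | x.2 == j]| <= k.
Proof.
case: (set_0Vmem [set x in L | x.2 == j]) => [->|[x0]]; first by rewrite cards0.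
rewrite !inE => /andP[/andP[_ /andP[_ hc]] /eqP e].
have hc' : col_count B j <= k by rewrite leqNgt -e.
apply: leq_trans hc'.
rewrite -(@card_in_imset _ _ (fun x : cell n m => x.1)); last first.
  move=> [a b] [c d]; rewrite !inE /= => /andP[_ /eqP ->] /andP[_ /eqP ->] -> //.
apply: subset_leq_card; apply/subsetP => y /imsetP[[a b]].
rewrite !inE /= => /andP[/andP[hb _] /eqP ea] ->; move: hb.
by rewrite /color /= ea.
Qed.

Lemma cut_light (c : cut n m) : #|L :&: cut_cells c| <= k.
Proof.
case: c => [i a b|j a b].
  apply: leq_trans (row_light i); apply: subset_leq_card; apply/subsetP => x.
  by rewrite !inE => /andP[-> /andP[-> _]].
apply: leq_trans (col_light j); apply: subset_leq_card; apply/subsetP => x.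
by rewrite !inE => /andP[-> /andP[-> _]].
Qed.

Lemma run_light (s : seq (cut n m)) (S T : {set cell n m}) :
  run B S s = Some T -> #|L :&: S| <= #|L :&: T| + k * size s.
Proof.
elim: s S => [|c s IH] S /=; first by move=> [->]; rewrite muln0 addn0.
case: ifP => // _ /IH h.
apply: leq_trans (_ : #|L :&: apply_cut S c| + #|L :&: cut_cells c| <= _).
  rewrite /apply_cut setIDA -(cardsID (cut_cells c) (L :&: S)) addnC leq_add2l.
  by apply: subset_leq_card; rewrite setIAC subsetIl.
by rewrite mulnS addnCA addnC leq_add ?cut_light.
Qed.
End Aux.

Theorem mainTheorem3 (n m : nat) (B : 'M[nat]_(n, m)) (k : nat) :
  k ^ 2 < #|light_buttons B k| -> ~ yes_instance B k.
Proof.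
move=> hk [s [hs hr]].
have := run_light k hr; rewrite setI0 cards0 add0n.
have -> : light_buttons B k :&: buttons B = light_buttons B k.
  by apply/setIidPl/subsetP => x; rewrite inE => /andP[].
move=> h; have := leq_trans h (leq_mul (leqnn k) hs).
by rewrite leqNgt mulnn hk.
Qed.
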